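(* Let $N\ge2$ and let $C\subset\mathbb{P}^N$ be an irreducible curve with $C\cap\Delta_{N-2}=\emptyset$. Then every coordinate point $p$ of $\mathbb{P}^N$ (e.g. $p=(1:0:\cdots:0)$) satisfies $\operatorname{Hrk}_C(p)=N$.
   Context: Hadamard product: $(p_0:\cdots:p_N)\star(q_0:\cdots:q_N)=(p_0q_0:\cdots:p_Nq_N)$, defined when not all $p_iq_i$ vanish. $\operatorname{Hrk}_C(q)=\min\{m\mid q=p_1\star\cdots\star p_m,\ p_i\in C\}$ ($\infty$ if none). $\Delta_{N-2}\subset\mathbb{P}^N$ is the set of points with at least two coordinates equal to zero. *)

(* Defs.v *)
From HB Require Import structures.
From mathcomp Require Import all_boot all_order all_algebra.
From mathcomp Require Import mpoly.
Set Implicit Arguments. Unset Strict Implicit. Unset Printing Implicit Defensive.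
Import Order.TTheory GRing.Theory.
Local Open Scope ring_scope.

Section Proj.
Variables (K : closedFieldType) (N : nat).

(* Homogeneous coordinates: a point of P^N is represented by a nonzero
   vector x : 'I_(N+1) -> K, up to nonzero scaling. Subsets of P^N are
   represented by scaling-invariant predicates on nonzero vectors. *)
Definition vec := 'I_N.+1 -> K.

Definition nonzero (x : vec) : Prop := exists i, x i != 0.

Definition proj_eq (x y : vec) : Prop :=
  nonzero x /\ exists c : K, c != 0 /\ forall i, y i = c * x i.

Definition homogeneous (d : nat) (p : {mpoly K[N.+1]}) : Prop :=
  {in msupp p, forall m, mdeg m = d}.

Definition Vzero (S : {mpoly K[N.+1]} -> Prop) (x : vec) : Prop :=
  nonzero x /\ forall p, S p -> p.@[x] = 0.

Definition zclosed (A : vec -> Prop) : Prop :=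
  exists S : {mpoly K[N.+1]} -> Prop,
    (forall p, S p -> exists d, homogeneous d p) /\ forall x, A x <-> Vzero S x.

Definition subsetP (A B : vec -> Prop) : Prop := forall x, A x -> B x.
Definition psubsetP (A B : vec -> Prop) : Prop :=
  subsetP A B /\ exists x, B x /\ ~ A x.

Definition irreducible (A : vec -> Prop) : Prop :=
  zclosed A /\ (exists x, A x) /\
  forall B1 B2, zclosed B1 -> zclosed B2 -> subsetP A (fun x => B1 x \/ B2 x) ->
    subsetP A B1 \/ subsetP A B2.

(* irreducible curve: irreducible closed subset of (Krull) dimension 1:
   the longest chain of irreducible closed subsets Z0 < Z1 < ... inside C
   has length exactly 1. *)
Definition irreducible_curve (C : vec -> Prop) : Prop :=
  irreducible C /\
  (exists Z, irreducible Z /\ psubsetP Z C) /\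
  ~ (exists Z0 Z1, irreducible Z0 /\ irreducible Z1 /\
        psubsetP Z0 Z1 /\ psubsetP Z1 C).

Definition Delta (x : vec) : Prop :=
  exists i j : 'I_N.+1, i != j /\ x i = 0 /\ x j = 0.

Definition hadamard_prod (m : nat) (ps : 'I_m -> vec) : vec :=
  fun i => \prod_(j < m) ps j i.

(* q = p_1 * ... * p_m with p_j in C (the product being defined, i.e.
   nonzero, which is forced by proj_eq) *)
Definition hdecomp (C : vec -> Prop) (q : vec) (m : nat) : Prop :=
  exists ps : 'I_m -> vec, (forall j, C (ps j)) /\ proj_eq (hadamard_prod ps) q.

Definition Hrk_is (C : vec -> Prop) (q : vec) (n : nat) : Prop :=
  (0 < n)%N /\ hdecomp C q n /\ forall m, (0 < m)%N -> hdecomp C q m -> (n <= m)%N.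

Definition coord_point (k : 'I_N.+1) : vec := fun i => (i == k)%:R.

End Proj.

(* Main.v *)
Require Import Defs.
From mathcomp Require Import all_boot all_order all_algebra.
From mathcomp Require Import mpoly.
From Stdlib Require Import Classical FunctionalExtensionality.
From Stdlib Require List.
From mathcomp Require Import ring.
Set Implicit Arguments. Unset Strict Implicit. Unset Printing Implicit Defensive.
Import Order.TTheory GRing.Theory.
Local Open Scope ring_scope.

Section Basics.
Variable K : closedFieldType.

Lemma closed_notin (s : seq K) : exists x, x \notin s.
Proof.
pose q : {poly K} := 'X * \prod_(a <- s) ('X - a%:P).
have sq : size q = (size s).+2.
  by rewrite /q mulrC size_mulX ?size_prod_XsubC // monic_neq0 // monic_prod_XsubC.
have : size (q - 1) != 1%N.
  by rewrite size_polyDl ?sq // size_polyN size_poly1.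
case/closed_rootP => x; rewrite /root !hornerE horner_prod subr_eq0 => /eqP hx.
exists x; apply/negP => xs.
move: hx; rewrite (big_rem _ xs) /= !hornerE subrr /= mulr0 mul0r => /eqP.
by rewrite eq_sym oner_eq0.
Qed.

Lemma poly_roots_fin (p : {poly K}) : p != 0 ->
  exists rs : seq K, forall x, root p x -> x \in rs.
Proof.
move=> p0; case: (closed_field_poly_normal p) => rs prs; exists rs => x.
by rewrite prs rootZ ?lead_coef_eq0 // root_prod_XsubC.
Qed.

Lemma poly_zero_off (p : {poly K}) (s : seq K) :
  (forall x, x \notin s -> p.[x] = 0) -> p = 0.
Proof.
move=> h; apply/eqP/negPn/negP => p0.
case: (poly_roots_fin p0) => rs hrs.
case: (closed_notin (s ++ rs)) => x; rewrite mem_cat negb_or => /andP[xs xrs].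
by move: xrs; rewrite (hrs x) //; apply/eqP/h.
Qed.

Lemma meval_scale n d (p : {mpoly K[n]}) (c : K) (x : 'I_n -> K) :
  p \is d.-homog -> p.@[fun i => c * x i] = c ^+ d * p.@[x].
Proof.
move=> /dhomogP hp; rewrite !mevalE mulr_sumr; apply: eq_big_seq => m hm.
rewrite mulrCA; congr (_ * _).
rewrite (eq_bigr (fun i => c ^+ m i * x i ^+ m i)); last by move=> i _; rewrite exprMn.
by rewrite big_split /= prodrXr -mdegE hp.
Qed.


Lemma homogP' n d (p : {mpoly K[n.+1]}) : homogeneous d p -> p \is d.-homog.
Proof. by move=> h; apply/dhomogP. Qed.

Lemma nonzero_scale n (x : vec K n) c : nonzero x -> c != 0 -> nonzero (fun i => c * x i).
Proof. by case=> i xi c0; exists i; rewrite mulf_neq0. Qed.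

Lemma zclosed_scale n (A : vec K n -> Prop) x c :
  zclosed A -> A x -> c != 0 -> A (fun i => c * x i).
Proof.
case=> S [hS hA] Ax c0; apply/hA; have [nz hz] := (hA x).1 Ax.
split; first exact: nonzero_scale.
move=> p Sp; case: (hS p Sp) => d /homogP' hd.
by rewrite (meval_scale _ _ hd) hz // mulr0.
Qed.

Lemma pihomog_big n (h : {mpoly K[n]}) d : (msize h <= d)%N -> pihomog mdeg d h = 0.
Proof.
move=> hd; rewrite pihomogE big_seq_cond big_pred0 // => m.
case: (boolP (m \in msupp h)) => //= mh.
by apply/negbTE; rewrite neq_ltn (leq_trans (msize_mdeg_lt mh) hd).
Qed.

Lemma pclosed_zclosed n (A : vec K n -> Prop) (T : {mpoly K[n.+1]} -> Prop) :
  (forall x, A x <-> nonzero x /\ forall h, T h -> h.@[x] = 0) ->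
  (forall x c, A x -> c != 0 -> A (fun i => c * x i)) -> zclosed A.
Proof.
move=> hA hs.
exists (fun p => exists h d, T h /\ p = pihomog mdeg d h).
split.
  by move=> p [h [d [_ ->]]]; exists d; apply/dhomogP/pihomogP.
move=> x; split.
- move=> Ax; have [nz hT] := (hA x).1 Ax; split => // p [h [d [Th ->]]].
  pose k := msize h.
  pose Q : {poly K} := \poly_(i < k) (pihomog mdeg i h).@[x].
  have HQ : forall t, Q.[t] = h.@[fun i => t * x i].
    move=> t; rewrite horner_poly.
    transitivity (\sum_(i < k) (pihomog mdeg i h).@[fun i => t * x i]).
      apply: eq_bigr => i _.
      by rewrite mulrC; symmetry; apply: meval_scale; apply: pihomogP.
    have hp : h = \sum_(i < k) pihomog mdeg i h := pihomog_partitionE (leqnn k).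
    by rewrite -raddf_sum -hp.
  have Q0 : Q = 0.
    apply: (@poly_zero_off Q [:: 0]) => t; rewrite inE => t0.
    by rewrite HQ; apply: ((hA _).1 (hs _ _ Ax t0)).2.
  case: (ltnP d k) => dk.
    by move: (congr1 (fun q : {poly K} => q`_d) Q0); rewrite coef_poly dk coef0.
  by rewrite pihomog_big // meval0.
- case=> nz hz; apply/hA; split => // h Th.
  rewrite (pihomog_partitionE (mf:=mdeg) (leqnn (msize h))) raddf_sum big1 // => d _.
  by apply: hz; exists h, d.
Qed.


Lemma zclosed_ext n (A B : vec K n -> Prop) :
  (forall x, A x <-> B x) -> zclosed A -> zclosed B.
Proof. by move=> hAB [S [hS hA]]; exists S; split => // x; rewrite -hA hAB. Qed.

Lemma not_vzero n (S : {mpoly K[n.+1]} -> Prop) (x : vec K n) :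
  nonzero x -> ~ Vzero S x -> exists p, S p /\ p.@[x] != 0.
Proof.
move=> nz hn; apply: NNPP => hne; apply: hn; split => // p Sp.
by case: (eqVneq (p.@[x]) 0) => // hp; exfalso; apply: hne; exists p.
Qed.

Lemma point_zclosed n (v : vec K n) : nonzero v -> zclosed (proj_eq v).
Proof.
move=> nzv.
apply: (@pclosed_zclosed _ _ (fun h => exists i j, h = v j *: 'X_i - v i *: 'X_j)).
  move=> x; split.
    case=> _ [c [c0 hx]]; split.
      by case: nzv => i vi; exists i; rewrite hx mulf_neq0.
    move=> h [i [j ->]]; rewrite mevalB !mevalZ !mevalXU !hx.
    by rewrite mulrCA [v i * _]mulrCA [v j * v i]mulrC subrr.
  case=> nzx h; split => //; case: nzv => i0 vi0.
  have hj : forall j, x j = v j * (x i0 / v i0).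
    move=> j; have := h _ (ex_intro _ j (ex_intro _ i0 erefl)).
    rewrite mevalB !mevalZ !mevalXU => /eqP; rewrite subr_eq0 => /eqP e.
    apply: (mulfI vi0); rewrite e; field; exact vi0.
  exists (x i0 / v i0); split; last by move=> j; rewrite hj mulrC.
  apply/negP => /eqP c0; case: nzx => j; rewrite hj c0 mulr0 eqxx //.
move=> x c [_ [c' [c'0 hx]]] c0; split; first exact: nzv.
by exists (c * c'); split; [rewrite mulf_neq0 | move=> i; rewrite hx mulrA].
Qed.

Lemma union_zclosed n (A B : vec K n -> Prop) :
  zclosed A -> zclosed B -> zclosed (fun x => A x \/ B x).
Proof.
move=> zA zB; have [SA [hSA hA]] := zA; have [SB [hSB hB]] := zB.
apply: (@pclosed_zclosed _ _ (fun h => exists p q, SA p /\ SB q /\ h = p * q)).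
  move=> x; split.
    case=> [/hA [nz hz] | /hB [nz hz]]; split => // h [p [q [Sp [Sq ->]]]].
      by rewrite mevalM (hz p) // mul0r.
    by rewrite mevalM (hz q) // mulr0.
  case=> nz hz; case: (classic (A x)) => Ax; [by left | right].
  have [p [Sp px]] : exists p, SA p /\ p.@[x] != 0.
    by apply: not_vzero => // hv; apply: Ax; apply/hA.
  apply/hB; split => // q Sq; have := hz _ (ex_intro _ p (ex_intro _ q (conj Sp (conj Sq erefl)))).
  by rewrite mevalM => /eqP; rewrite mulf_eq0 (negbTE px) => /eqP.
move=> x c [Ax|Bx] c0; [left; exact: zclosed_scale | right; exact: zclosed_scale].
Qed.

Lemma empty_zclosed n : zclosed (fun _ : vec K n => False).
Proof.
apply: (@pclosed_zclosed _ _ (fun h => h = 1)) => // x; split => // [[_ h]].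
by have := h 1 erefl; rewrite meval1 => /eqP; rewrite oner_eq0.
Qed.

Definition funion n (L : seq (vec K n)) (x : vec K n) :=
  exists v, List.In v L /\ proj_eq v x.

Lemma funion_zclosed n (L : seq (vec K n)) :
  (forall v, List.In v L -> nonzero v) -> zclosed (funion L).
Proof.
elim: L => [|v L IH] hL.
  by apply: (zclosed_ext _ (@empty_zclosed n)) => x; split => // [[v []]].
apply: (zclosed_ext _ (union_zclosed (point_zclosed (hL v (or_introl erefl)))
   (IH (fun w hw => hL w (or_intror hw))))).
move=> x; split.
  by case=> [h|[w [hw h]]]; [exists v; split; [left|] | exists w; split; [right|]].
by case=> w [[<-|hw] h]; [left | right; exists w].
Qed.

Lemma irr_point n (C : vec K n -> Prop) (L : seq (vec K n)) :
  irreducible C -> (forall v, List.In v L -> nonzero v) ->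
  (forall x, C x -> funion L x) -> exists v, forall x, C x -> proj_eq v x.
Proof.
move=> hC; elim: L => [|v L IH] hL hCL.
  by case: hC => _ [[x Cx] _]; case: (hCL x Cx) => w [[]].
have hL' : forall w, List.In w L -> nonzero w by move=> w hw; apply: hL; right.
have := hC.2.2 (proj_eq v) (funion L) (point_zclosed (hL v (or_introl erefl)))
  (funion_zclosed hL').
case.
- move=> x Cx; case: (hCL x Cx) => w [[<-|hw] h]; [by left | by right; exists w].
- by move=> h; exists v.
- by move=> h; apply: IH.
Qed.

Lemma curve_not_point n (C : vec K n -> Prop) :
  irreducible_curve C -> ~ exists v, forall x, C x -> proj_eq v x.
Proof.
case=> _ [[Z [hZ [sZC [x [Cx nZx]]]]] _] [v hv].
case: hZ => zZ [[z Zz] _].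
have [_ [c [c0 hz]]] := hv z (sZC z Zz).
have [_ [c' [c'0 hx]]] := hv x Cx.
apply: nZx.
have -> : x = (fun i => (c' / c) * z i).
  by apply: functional_extensionality => i; rewrite hx hz; field; exact c0.
by apply: zclosed_scale => //; rewrite mulf_neq0 ?invr_eq0.
Qed.

End Basics.



Section Proj.
Variable K : closedFieldType.

Section Piv.
Variables (n : nat) (p : 'I_n.+2).

Definition ext (y : vec K n) (s : K) : vec K n.+1 :=
  fun i => if unlift p i is Some j then y j else s.

Lemma ext_lift y s j : ext y s (lift p j) = y j.
Proof. by rewrite /ext liftK. Qed.

Lemma ext_p y s : ext y s p = s.
Proof. by rewrite /ext unlift_none. Qed.

Lemma ext_scale (y : vec K n) s c :
  (fun i => c * ext y s i) = ext (fun j => c * y j) (c * s).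
Proof. by apply: functional_extensionality => i; rewrite /ext; case: unliftP. Qed.

Lemma ext_nonzero y s : nonzero y -> nonzero (ext y s).
Proof. by case=> j yj; exists (lift p j); rewrite ext_lift. Qed.

Definition mdrop (m : 'X_{1..n.+2}) : 'X_{1..n.+1} := [multinom m (lift p j) | j < n.+1].

Lemma mdeg_split (m : 'X_{1..n.+2}) : mdeg m = (m p + mdeg (mdrop m))%N.
Proof.
rewrite !mdegE (bigD1_ord p) //=; congr (_ + _)%N.
by apply: eq_bigr => j _; rewrite mnmE.
Qed.

Definition toP (f : {mpoly K[n.+2]}) : {poly {mpoly K[n.+1]}} :=
  \poly_(k < msize f) (\sum_(m <- msupp f | m p == k) f@_m *: 'X_[mdrop m]).

Lemma sum_pick (R : nmodType) (K0 a : nat) (F : nat -> R) : (a < K0)%N ->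
  \sum_(k < K0) (if a == k then F k else 0) = F a.
Proof.
move=> h; rewrite (bigD1 (Ordinal h)) //= eqxx big1 ?addr0 // => k hk.
case: eqP => // e; exfalso; move/negP: hk; apply; apply/eqP/val_inj; by rewrite /= e.
Qed.

Lemma toP_eval (f : {mpoly K[n.+2]}) (y : vec K n) (s : K) :
  (map_poly (meval y) (toP f)).[s] = f.@[ext y s].
Proof.
rewrite (@horner_coef_wide _ (msize f)); last first.
  by apply/leq_sizeP => j hj; rewrite coef_map coef_poly ltnNge hj /= raddf0.
transitivity (\sum_(k < msize f) \sum_(m <- msupp f)
   (if m p == k then f@_m * (\prod_j y j ^+ mdrop m j) * s ^+ k else 0)).
  apply: eq_bigr => k _; rewrite coef_map coef_poly ltn_ord raddf_sum mulr_suml.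
  rewrite big_mkcond /=; apply: eq_bigr => m _.
  by case: eqP => // _; rewrite mevalZ mevalX.
rewrite exchange_big mevalE /=; apply: eq_big_seq => m hm.
rewrite (sum_pick (fun k => f@_m * (\prod_j y j ^+ mdrop m j) * s ^+ k)); last first.
  by rewrite (leq_ltn_trans _ (msize_mdeg_lt hm)) // mdeg_split leq_addr.
rewrite -mulrA; congr (_ * _).
rewrite (bigD1_ord p) //= ext_p mulrC; congr (_ * _).
by apply: eq_bigr => j _; rewrite ext_lift mnmE.
Qed.


Lemma homog_pU (m : 'X_{1..n.+2}) d : mdeg m = d -> (m p == d) = (m == U_(p) *+ d)%MM.
Proof.
move=> hm; apply/eqP/eqP => [hp|->]; last by rewrite mulmnE mnm1E eqxx mul1n.
have : mdeg (mdrop m) = 0%N by move: hm; rewrite mdeg_split hp => /eqP; rewrite -{2}[d]addn0 eqn_add2l => /eqP.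
move/eqP; rewrite mdeg_eq0 => /eqP h0.
apply/mnmP => i; rewrite mulmnE mnm1E; case: (unliftP p i) => [j ->|->].
  have := congr1 (fun mm : 'X_{1..n.+1} => mm j) h0; rewrite mnmE /= => ->.
  by rewrite mnmE (negbTE (neq_lift _ _)).
by rewrite eqxx mul1n hp.
Qed.

Lemma sum_msupp_pick (R : nmodType) k (f : {mpoly K[k]}) (u : 'X_{1..k}) (F : 'X_{1..k} -> R) :
  \sum_(m <- msupp f) (if m == u then F m else 0) = if u \in msupp f then F u else 0.
Proof.
rewrite -big_mkcond -big_filter; case: ifP => hu.
  by rewrite filter_pred1_uniq ?msupp_uniq // big_seq1.
rewrite big_seq big1 // => m; rewrite mem_filter => /andP[/eqP -> hu'].
by rewrite hu' in hu.
Qed.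

Lemma mdeg_U d : mdeg (U_(p) *+ d)%MM = d.
Proof. by rewrite mdegMn mdeg1 mul1n. Qed.

Lemma toP_size f d : homogeneous d f -> (size (toP f) <= d.+1)%N.
Proof.
move=> hf; apply/leq_sizeP => j hj; rewrite coef_poly; case: ifP => // _.
rewrite big_seq_cond big_pred0 // => m; case: (boolP (m \in msupp f)) => //= hm.
apply/negbTE; rewrite neq_ltn (leq_ltn_trans _ hj) //.
by rewrite -(hf m hm) mdeg_split leq_addr.
Qed.

Lemma toP_coef f d : homogeneous d f -> (toP f)`_d = (f@_(U_(p) *+ d))%:MP.
Proof.
move=> hf; rewrite coef_poly; case: ltnP => hd.
  rewrite big_mkcond /=.
  rewrite (eq_big_seq (fun m => if m == (U_(p) *+ d)%MM then f@_m *: 'X_[mdrop m] else 0)); last first.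
    by move=> m hm /=; rewrite homog_pU ?hf.
  rewrite sum_msupp_pick; case: ifP => hU; last by rewrite memN_msupp_eq0 ?hU // mpolyC0.
  have -> : mdrop (U_(p) *+ d) = 0%MM.
    by apply/mnmP => j; rewrite !mnmE mulmnE mnm1E (negbTE (neq_lift p j)) mul0n.
  by rewrite mpolyX0 -alg_mpolyC.
rewrite memN_msupp_eq0 ?mpolyC0 //; apply: msize_mdeg_ge; by rewrite mdeg_U.
Qed.

Lemma eval_ep f d : homogeneous d f -> f.@[coord_point K p] = f@_(U_(p) *+ d).
Proof.
move=> hf; rewrite mevalE.
rewrite (eq_big_seq (fun m => if m == (U_(p) *+ d)%MM then f@_m else 0)); last first.
  move=> m hm; rewrite (bigD1_ord p) //= /coord_point eqxx expr1n mul1r.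
  case: (boolP [forall j, m (lift p j) == 0%N]) => [/forallP h0|/forallPn [j hj]].
    rewrite big1 ?mulr1; last by move=> j _; rewrite (eqP (h0 j)) expr0.
    have -> : m == (U_(p) *+ d)%MM.
      rewrite -homog_pU ?hf //; apply/eqP; move: (hf m hm); rewrite mdeg_split.
      suff -> : mdeg (mdrop m) = 0%N by rewrite addn0.
      by apply/eqP; rewrite mdeg_eq0; apply/eqP/mnmP => j; rewrite !mnmE (eqP (h0 j)).
    by [].
  rewrite (bigD1 j) //= eq_sym (negbTE (neq_lift p j)) expr0n (negbTE hj) mul0r mulr0.
  case: eqP => // e; exfalso; move/negP: hj; apply; by rewrite e mulmnE mnm1E (negbTE (neq_lift p j)) mul0n.
rewrite sum_msupp_pick; case: ifP => // hU.
by rewrite memN_msupp_eq0 ?hU.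
Qed.

Lemma coord_nonzero : nonzero (coord_point K p).
Proof. by exists p; rewrite /coord_point eqxx oner_eq0. Qed.

Lemma good_f0 (S : {mpoly K[n.+2]} -> Prop) :
  (forall f, S f -> exists d, homogeneous d f) -> ~ Vzero S (coord_point K p) ->
  exists f0 d, S f0 /\ size (toP f0) = d.+1 /\
    lead_coef (toP f0) = (f0@_(U_(p) *+ d))%:MP /\ f0@_(U_(p) *+ d) != 0.
Proof.
move=> hS hV; have [f0 [Sf0 hf0]] := not_vzero coord_nonzero hV.
have [d hd] := hS f0 Sf0.
have c0 : f0@_(U_(p) *+ d) != 0 by rewrite -(eval_ep hd).
have hsz : size (toP f0) = d.+1.
  apply/anti_leq; rewrite toP_size //=; case: (leqP (size (toP f0)) d) => // hs.
  by move: c0; rewrite -(@mpolyC_eq0 n.+1) -(toP_coef hd) (leq_sizeP _ _ hs) ?eqxx.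
exists f0, d; split => //; split => //; split => //.
by rewrite lead_coefE hsz toP_coef.
Qed.

End Piv.
End Proj.




Lemma map_resultant' (aR rR : nzRingType) (f : {rmorphism aR -> rR}) (p q : {poly aR}) :
    f (lead_coef p) != 0 -> f (lead_coef q) != 0 ->
  f (resultant p q) = resultant (map_poly f p) (map_poly f q).
Proof.
move=> nz_fp nz_fq; rewrite /resultant /Sylvester_mx !size_map_poly_id0 //.
rewrite -det_map_mx /= map_col_mx; congr (\det (col_mx _ _));
  by apply: map_lin1_mx => v; rewrite map_poly_rV rmorphM /= map_rVpoly.
Qed.

Section Proj3.
Variable K : closedFieldType.

Lemma res0_root (P Q : {poly K}) : P != 0 ->
  (resultant P Q == 0) <-> exists r, root P r /\ root Q r.
Proof.
move=> P0; rewrite resultant_eq0; split.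
  move=> hs; have : size (gcdp P Q) != 1%N by rewrite neq_ltn hs orbT.
  by case/closed_rootP => r; rewrite root_gcd => /andP[? ?]; exists r.
case=> r [hP hQ]; apply: (@root_size_gt1 _ r); first by rewrite gcdp_eq0 negb_and P0.
by rewrite root_gcd hP hQ.
Qed.

Lemma lin_avoid m (V : {mpoly K[m]} -> Prop) (w : K -> 'I_m -> K) (rs : seq K) :
  V 0 -> (forall f g c, V f -> V g -> V (f + c *: g)) ->
  (forall r, r \in rs -> exists f, V f /\ f.@[w r] != 0) ->
  exists g, V g /\ forall r, r \in rs -> g.@[w r] != 0.
Proof.
move=> V0 VD; elim: rs => [|r rs IH] hr; first by exists 0; split.
have [g [Vg hg]] : exists g, V g /\ forall r, r \in rs -> g.@[w r] != 0.
  by apply: IH => r' hr'; apply: hr; rewrite inE hr' orbT.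
have [f [Vf fr]] := hr r (mem_head _ _).
pose bad := (- g.@[w r] / f.@[w r]) :: [seq - g.@[w r'] / f.@[w r'] | r' <- rs].
have [t tb] := closed_notin bad.
have aux : forall a b, b != 0 -> a + t * b = 0 -> t = - a / b.
  move=> a b b0 e; apply: (mulIf b0); rewrite divfK //.
  by apply/eqP; rewrite -addr_eq0 addrC e.
exists (g + t *: f); split; first exact: VD.
move=> r0; rewrite inE mevalD mevalZ => /orP[/eqP ->|hr0].
  apply/eqP => e; move/negP: tb; apply; by rewrite (aux _ _ fr e) mem_head.
case: (eqVneq f.@[w r0] 0) => [->|f0]; first by rewrite mulr0 addr0 hg.
apply/eqP => e; move/negP: tb; apply; rewrite (aux _ _ f0 e) inE; apply/orP; right.
by apply: (map_f (fun r' => - g.@[w r'] / f.@[w r'])).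
Qed.

Section Piv3.
Variables (n : nat) (p : 'I_n.+2).

Lemma fiber_fin (X : vec K n.+1 -> Prop) : zclosed X -> ~ X (coord_point K p) ->
  forall y, nonzero y -> exists rs : seq K, forall s, X (ext p y s) -> s \in rs.
Proof.
case=> S [hS hX] nX y nzy.
have nV : ~ Vzero S (coord_point K p) by move=> h; apply: nX; apply/hX.
have [f0 [d [Sf0 [hsz [hlc c0]]]]] := good_f0 hS nV.
pose P := map_poly (meval y) (toP p f0).
have P0 : P != 0.
  by rewrite -size_poly_eq0 size_map_poly_id0 ?hlc ?mevalC // hsz.
have [rs hrs] := poly_roots_fin P0; exists rs => s Xs; apply: hrs.
by rewrite /root /P toP_eval ((hX _).1 Xs).2.
Qed.


Lemma proj_zclosed (X : vec K n.+1 -> Prop) : zclosed X -> ~ X (coord_point K p) ->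
  zclosed (fun y : vec K n => nonzero y /\ exists s, X (ext p y s)).
Proof.
move=> zX nX; have [S [hS hX]] := zX.
have nV : ~ Vzero S (coord_point K p) by move=> h; apply: nX; apply/hX.
have [f0 [d [Sf0 [hsz [hlc c0]]]]] := good_f0 hS nV.
set c := f0@_(U_(p) *+ d) in hlc c0.
have F0 : toP p f0 != 0 by rewrite -size_poly_eq0 hsz.
pose Q g := toP p g + toP p f0 * 'X^(size (toP p g)).
have lcQ : forall g, lead_coef (Q g) = c%:MP.
  move=> g; rewrite /Q lead_coefDr ?lead_coef_Mmonic ?monicXn //.
  by rewrite size_mulXn // hsz addnS ltnS leq_addr.
have ev : forall g y s, (map_poly (meval y) (Q g)).[s] =
    g.@[ext p y s] + f0.@[ext p y s] * s ^+ size (toP p g).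
  move=> g y s; rewrite /Q rmorphD rmorphM /= map_polyXn hornerD hornerM hornerXn.
  by rewrite !toP_eval.
have f0X : forall x, X x -> f0.@[x] = 0 by move=> x Xx; apply: ((hX x).1 Xx).2.
have P0 : forall y : vec K n, map_poly (meval y) (toP p f0) != 0.
  by move=> y; rewrite -size_poly_eq0 size_map_poly_id0 ?hlc ?mevalC // hsz.
have hres : forall y g, (meval y (resultant (toP p f0) (Q g)) == 0) <->
    exists r, root (map_poly (meval y) (toP p f0)) r /\ root (map_poly (meval y) (Q g)) r.
  move=> y g; rewrite (@map_resultant' _ _ (meval y)) ?lcQ ?hlc ?mevalC //.
  - exact: res0_root (P0 y).
  - have e := mevalC y c. rewrite -[X in X != 0]/(meval y c%:MP) e //.
  - by have e := mevalC y c; rewrite -[X in X != 0]/(meval y c%:MP) e.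
apply: (@pclosed_zclosed _ _ _
  (fun h => exists g, (forall x, X x -> g.@[x] = 0) /\ h = resultant (toP p f0) (Q g))).
  move=> y; split.
    case=> nzy [s Xs]; split => // h [g [hg ->]]; apply/eqP/hres; exists s.
    by rewrite /root toP_eval ev f0X // hg // mul0r addr0 eqxx.
  case=> nzy hT; split => //; apply: NNPP => hne.
  have [rs hrs] := poly_roots_fin (P0 y).
  have hr : forall r, r \in rs -> exists f, (forall x, X x -> f.@[x] = 0) /\ f.@[ext p y r] != 0.
    move=> r _; have nVr : ~ Vzero S (ext p y r).
      by move=> h; apply: hne; exists r; apply/hX.
    have [f [Sf fr]] := not_vzero (ext_nonzero p r nzy) nVr.
    by exists f; split => // x Xx; apply: ((hX x).1 Xx).2.
  have [g [Vg hg]] := lin_avoid (w := ext p y) (V := fun f => forall x, X x -> f.@[x] = 0)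
    (fun x _ => meval0 _) (fun f g c hf hgg x Xx => ltac:(by rewrite mevalD mevalZ hf // hgg // mulr0 addr0)) hr.
  have := hT _ (ex_intro _ g (conj Vg erefl)); move/eqP/hres => [r [hPr hQr]].
  have rrs := hrs r hPr.
  have fr : f0.@[ext p y r] = 0 by rewrite -toP_eval; apply/eqP.
  move: hQr; rewrite /root ev fr mul0r addr0.
  by rewrite (negbTE (hg r rrs)).
move=> y a [nzy [s Xs]] a0; split; first exact: nonzero_scale.
by exists (a * s); rewrite -ext_scale; apply: zclosed_scale.
Qed.

End Piv3.
End Proj3.




Section Fin.
Variable K : closedFieldType.

Lemma mem_In (T : eqType) (x : T) (s : seq T) : x \in s -> List.In x s.
Proof. by elim: s => //= a s IH; rewrite inE => /orP[/eqP ->|h]; [left|right; apply: IH]. Qed.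

Lemma fibers_collect n (p : 'I_n.+2) (X : vec K n.+1 -> Prop) :
  zclosed X -> ~ X (coord_point K p) ->
  forall L' : seq (vec K n), (forall v, List.In v L' -> nonzero v) ->
  exists L : seq (vec K n.+1), (forall v, List.In v L -> nonzero v) /\
    forall y s, List.In y L' -> X (ext p y s) -> List.In (ext p y s) L.
Proof.
move=> zX nX; elim=> [|y L' IH] hL'.
  by exists [::]; split => // y s [].
have [L [hL hLc]] := IH (fun v hv => hL' v (or_intror hv)).
have nzy := hL' y (or_introl erefl).
have [rs hrs] := fiber_fin zX nX nzy.
exists (List.app (List.map (ext p y) rs) L); split.
  move=> v hv; case: (List.in_app_or _ _ _ hv) => [hm|hv']; last exact: hL.
  have [r [<- _]] := proj1 (List.in_map_iff _ _ _) hm.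
  exact: ext_nonzero.
move=> y' s [<-|hy'] Xs; apply: List.in_or_app; last by right; apply: hLc.
by left; apply: List.in_map; apply: mem_In; apply: hrs.
Qed.

Definition finp n (X : vec K n -> Prop) := exists L : seq (vec K n),
  (forall v, List.In v L -> nonzero v) /\ forall x, X x -> funion L x.

Lemma fin_hyper n : forall (X : vec K n -> Prop) (i0 : 'I_n.+1),
  zclosed X -> (forall x, X x -> x i0 != 0) -> finp X.
Proof.
elim: n => [|n IH] X i0 zX hX.
  exists [:: fun _ => 1]; split.
    by move=> v [<-|[]]; exists ord0; rewrite oner_eq0.
  move=> x Xx; exists (fun _ => 1); split; first by left.
  split; first by exists ord0; rewrite oner_eq0.
  exists (x i0); split; first exact: hX.
  by move=> i; rewrite mulr1 (ord1 i) (ord1 i0).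
pose p : 'I_n.+2 := if i0 == ord_max then ord0 else ord_max.
have pi0 : p != i0.
  rewrite /p; case: (eqVneq i0 ord_max) => [->|h]; last by rewrite eq_sym.
  by apply/eqP => /(congr1 val).
have [j0 hj0] : exists j0, i0 = lift p j0.
  case: (unliftP p i0) => [j ->|e]; first by exists j.
  by move: pi0; rewrite e eqxx.
have nX : ~ X (coord_point K p).
  have ip : (i0 == p) = false by rewrite eq_sym (negbTE pi0).
  by move=> h; move: (hX _ h); rewrite /coord_point ip eqxx.
pose Y := fun y : vec K n => nonzero y /\ exists s, X (ext p y s).
have zY : zclosed Y := proj_zclosed zX nX.
have hY : forall y, Y y -> y j0 != 0.
  by move=> y [_ [s Xs]]; move: (hX _ Xs); rewrite hj0 ext_lift.
have [L' [hL' hYL']] := IH Y j0 zY hY.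
have [L [hL hLc]] := fibers_collect zX nX hL'.
exists L; split => // x Xx.
pose y : vec K n := fun j => x (lift p j).
have exy : ext p y (x p) = x.
  by apply: functional_extensionality => i; rewrite /ext; case: (unliftP p i) => [j ->|->].
have Yy : Y y.
  split; first by exists j0; rewrite /y -hj0; apply: hX.
  by exists (x p); rewrite exy.
have [v [hv [_ [c [c0 hc]]]]] := hYL' y Yy.
have ex2 : ext p v (x p / c) = (fun i => c^-1 * x i).
  apply: functional_extensionality => i; rewrite /ext; case: (unliftP p i) => [j ->|->].
    by rewrite -/(y j) hc mulrA mulVf ?mul1r.
  by rewrite mulrC.
have Xe : X (ext p v (x p / c)) by rewrite ex2; apply: zclosed_scale => //; rewrite invr_eq0.
exists (ext p v (x p / c)); split; first exact: hLc.
split; first exact: hL (hLc _ _ hv Xe).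
exists c; split => // i; rewrite ex2 mulrA mulfV ?mul1r //.
Qed.

Lemma curve_meets n (C : vec K n -> Prop) (i : 'I_n.+1) :
  irreducible_curve C -> exists x, C x /\ x i = 0.
Proof.
move=> hC; apply: NNPP => h.
have hX : forall x, C x -> x i != 0.
  by move=> x Cx; apply/eqP => e; apply: h; exists x.
have [L [hL hCL]] := fin_hyper hC.1.1 hX.
have [v hv] := irr_point hC.1 hL hCL.
by apply: (curve_not_point hC); exists v.
Qed.

End Fin.




Theorem mainTheorem12 (K : closedFieldType) (N : nat) (hN : (2 <= N)%N)
  (C : vec K N -> Prop) :
  irreducible_curve C ->
  (forall x, C x -> ~ Delta x) ->
  forall k : 'I_N.+1, Hrk_is C (coord_point K k) N.
Proof.
move=> hC hD k.
have nD : forall x i i', C x -> i != i' -> x i = 0 -> x i' != 0.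
  move=> x i i' Cx ne xi; apply/eqP => xi'; apply: (hD x Cx); exists i, i'; split => //.
have [ps hps] := @fin_all_exists _ (fun _ => vec K N)
  (fun j x => C x /\ x (lift k j) = 0) (fun j => curve_meets (lift k j) hC).
split; first by apply: leq_trans hN.
split.
  exists ps; split; first by move=> j; case: (hps j).
  have pk : hadamard_prod ps k != 0.
    rewrite /hadamard_prod; apply/prodf_neq0 => j _.
    have [Cj zj] := hps j; apply: (nD _ (lift k j)) => //.
    by rewrite eq_sym neq_lift.
  split; first by exists k.
  exists (hadamard_prod ps k)^-1; split; first by rewrite invr_eq0.
  move=> i; rewrite /coord_point; case: (unliftP k i) => [j ->|->].
    rewrite eq_sym (negbTE (neq_lift k j)) /hadamard_prod.
    by rewrite [X in _ * X](bigD1 j) //= (hps j).2 mul0r mulr0.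
  by rewrite eqxx mulVf.
move=> m m0 [ps' [hC' [_ [c [c0 hc]]]]].
have hz : forall j : 'I_N, exists l : 'I_m, ps' l (lift k j) == 0.
  move=> j; have := hc (lift k j); rewrite /coord_point eq_sym (negbTE (neq_lift k j)).
  move/esym/eqP; rewrite mulf_eq0 (negbTE c0) /= /hadamard_prod.
  by case/prodf_eq0 => l _ hl; exists l.
have [phi hphi] := fin_all_exists hz.
have inj : injective phi.
  move=> j1 j2 e; case: (eqVneq j1 j2) => // ne; exfalso.
  apply: (hD (ps' (phi j1))) => //; exists (lift k j1), (lift k j2); split.
    by rewrite (inj_eq (@lift_inj _ k)).
  by split; apply/eqP; [exact: hphi | rewrite e; exact: hphi].
by have := leq_card phi inj; rewrite !card_ord.
Qed.
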